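(* Let $\varepsilon\in\{\pm1\}$ and let $(c_1,\dots,c_m)\in\mathbb{Z}^m$ be an $\varepsilon$-cycle. Indices are read cyclically modulo $m$. Then at least one of the following holds: (0) $m=2$ and $(c_1,c_2)=(0,0)$; (1) there is $k$ with $c_k=1$ such that $(c_1,\dots,c_{k-2},c_{k-1}-1,c_{k+1}-1,c_{k+2},\dots,c_m)$ is an $\varepsilon$-cycle of length $m-1$; (2) there is $k$ with $c_k=0$ such that $(c_1,\dots,c_{k-2},c_{k-1}+c_{k+1},c_{k+2},\dots,c_m)$ is a $(-\varepsilon)$-cycle of length $m-2$; (3) there is $k$ with $c_k=-1$ such that $(c_1,\dots,c_{k-2},c_{k-1}+1,c_{k+1}+1,c_{k+2},\dots,c_m)$ is a $(-\varepsilon)$-cycle of length $m-1$.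
   Context: $\eta(c)=\begin{pmatrix}c&-1\\1&0\end{pmatrix}$. For $\varepsilon\in\{\pm1\}$, an $\varepsilon$-cycle is a sequence $(c_1,\dots,c_m)\in\mathbb{Z}^m$ with $\eta(c_1)\cdots\eta(c_m)=\varepsilon I$. *)

(* Defs.v *)
From HB Require Import structures.
From mathcomp Require Import all_boot all_order all_algebra.
Set Implicit Arguments. Unset Strict Implicit. Unset Printing Implicit Defensive.
Import Order.TTheory GRing.Theory Num.Theory.
Local Open Scope ring_scope.

Definition eta (c : int) : 'M[int]_2 :=
  \matrix_(i < 2, j < 2)
    if (i == 0 :> nat) then (if (j == 0 :> nat) then c else -1)
    else (if (j == 0 :> nat) then 1 else 0).

Definition eta_prod (s : seq int) : 'M[int]_2 :=
  foldr (fun c M => eta c *m M) 1%:M s.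

Definition is_cycle (e : int) (s : seq int) : Prop := eta_prod s = e%:M.

(* Cyclic contraction at (0-indexed) position k, for size s >= 3:
   replaces (c_{k-1}, c_k, c_{k+1}) (indices mod m) by (f c_{k-1}, g c_{k+1}),
   keeping all other entries in their cyclic order, and for 1 <= k <= m-2
   (0-indexed) in exactly the literal order of the paper
   (c_0..c_{k-2}, f c_{k-1}, g c_{k+1}, c_{k+2}..c_{m-1}). *)
Definition contract_pair (f g : int -> int) (s : seq int) (k : nat) : seq int :=
  let m := size s in
  let r := ((k + m - 1) %% m)%N in
  match rot r s with
  | a :: _ :: b :: rest => rotr r (f a :: g b :: rest)
  | _ => [::]
  end.

Definition contract_sum (s : seq int) (k : nat) : seq int :=
  let m := size s in
  let r := ((k + m - 1) %% m)%N in
  match rot r s with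
  | a :: _ :: b :: rest => rotr r ((a + b) :: rest)
  | _ => [::]
  end.

(* Main.v *)
Require Import Defs.
From HB Require Import structures.
From mathcomp Require Import all_boot all_order all_algebra.
From mathcomp Require Import zify ring.
Import Order.TTheory GRing.Theory Num.Theory.
Local Open Scope ring_scope.

Lemma eta_prod_cat (s1 s2 : seq int) :
  eta_prod (s1 ++ s2) = eta_prod s1 *m eta_prod s2.
Proof.
elim: s1 => [|c s1 IH] /=; first by rewrite mul1mx.
by rewrite /eta_prod /= -/(eta_prod _) -/(eta_prod _) IH mulmxA.
Qed.

Lemma eta_prod_cons c s : eta_prod (c :: s) = Defs.eta c *m eta_prod s.
Proof. by []. Qed.

Lemma cycle_rot (e : int) s r : (e = 1 \/ e = -1) ->
  is_cycle e s -> is_cycle e (rot r s).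
Proof.
move=> he; rewrite /is_cycle /rot eta_prod_cat.
rewrite -{1}(cat_take_drop r s) eta_prod_cat => H.
have ee : e * e = 1 by case: he => ->.
have H1 : eta_prod (take r s) *m (e *: eta_prod (drop r s)) = 1%:M.
  by rewrite -scalemxAr H scale_scalar_mx ee.
have := mulmx1C H1.
rewrite -scalemxAl => H2.
have: e *: (e *: (eta_prod (drop r s) *m eta_prod (take r s))) = e *: 1%:M
  by rewrite H2.
by rewrite scalerA ee scale1r scale_scalar_mx mulr1.
Qed.

Lemma cycle_rotr (e : int) s r : (e = 1 \/ e = -1) ->
  is_cycle e s -> is_cycle e (rotr r s).
Proof. by move=> he H; rewrite /rotr; apply: cycle_rot. Qed.

Ltac mx2 := apply/matrixP; case => [[|[|?]] ?] //; case => [[|[|?]] ?] //;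
  rewrite ?mxE ?big_ord_recr ?big_ord0 ?add0r /= ?mxE /= ?big_ord_recr ?big_ord0 ?add0r /= ?mxE /=; ring.

Lemma eta3_1 a b : Defs.eta a *m Defs.eta 1 *m Defs.eta b = Defs.eta (a - 1) *m Defs.eta (b - 1).
Proof. rewrite /Defs.eta; mx2. Qed.

Lemma eta3_0 a b : Defs.eta a *m Defs.eta 0 *m Defs.eta b = - Defs.eta (a + b).
Proof. rewrite /Defs.eta; mx2. Qed.

Lemma eta3_m1 a b : Defs.eta a *m Defs.eta (-1) *m Defs.eta b = - (Defs.eta (a + 1) *m Defs.eta (b + 1)).
Proof. rewrite /Defs.eta; mx2. Qed.

Lemma mulE (a : int) (M : 'M[int]_2) :
  (Defs.eta a *m M) ord0 ord0 = a * M ord0 ord0 - M (lift ord0 ord0) ord0 /\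
  (Defs.eta a *m M) (lift ord0 ord0) ord0 = M ord0 ord0.
Proof.
rewrite !mxE ?big_ord_recr ?big_ord0 ?add0r /= ?mxE /=.
split.
- have -> : (widen_ord (leqnSn 1) ord_max) = ord0 :> 'I_2 by apply/val_inj.
  have -> : (@ord_max 1) = lift ord0 ord0 by apply/val_inj.
  ring.
- have -> : (widen_ord (leqnSn 1) ord_max) = ord0 :> 'I_2 by apply/val_inj.
  have -> : (@ord_max 1) = lift ord0 ord0 by apply/val_inj.
  ring.
Qed.

Lemma grow (s : seq int) : (forall c, c \in s -> 2 <= `|c|) ->
  `|eta_prod s (lift ord0 ord0) ord0| < `|eta_prod s ord0 ord0| /\
  (size s)%:Z < `|eta_prod s ord0 ord0|.
Proof.
elim: s => [|c s IH] Hs.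
  by rewrite /eta_prod /= !mxE.
have [H1 H2] := IH (fun x hx => Hs x (mem_behead (s:=c::s) hx)).
have hc := Hs c (mem_head _ _).
rewrite eta_prod_cons; have [-> ->] := mulE c (eta_prod s).
set x := eta_prod s ord0 ord0 in H1 H2 *.
set y := eta_prod s _ _ in H1 H2 *.
have h1 : `|c * x| - `|y| <= `|c * x - y| by rewrite -(normrN y) lerB_normD.
have h2 : `|c * x| = `|c| * `|x| by rewrite normrM.
have h3 : 2 * `|x| <= `|c| * `|x| by rewrite ler_wpM2r.
simpl size. split; lia.
Qed.

Lemma rot_shape (s : seq int) k : (3 <= size s)%N -> (k < size s)%N ->
  exists a b rest, rot ((k + size s - 1) %% size s)%N s = a :: nth 0 s k :: b :: rest.
Proof.
move=> h3 hk.
have hr : nth 0 (rot ((k + size s - 1) %% size s)%N s) 1 = nth 0 s k.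
  rewrite /rot nth_cat size_drop nth_drop.
  case: k hk => [|k] hk.
    have -> : ((0 + size s - 1) %% size s = size s - 1)%N by rewrite add0n modn_small //; lia.
    have -> : (1 < size s - (size s - 1))%N = false by lia.
    rewrite nth_take; last by lia.
    by have -> : (1 - (size s - (size s - 1)))%N = 0%N by lia.
  have -> : ((k.+1 + size s - 1) %% size s = k)%N.
    have -> : (k.+1 + size s - 1 = k + size s)%N by lia.
    by rewrite modnDr modn_small //; lia.
  have -> : (1 < size s - k)%N = true by lia.
  by rewrite addn1.
have hs : size (rot ((k + size s - 1) %% size s)%N s) = size s by rewrite size_rot.
move: hr hs; case: (rot _ s) => [|a [|x [|b rest]]] /=; try lia.
by move=> -> _; exists a, b, rest.
Qed.

Lemma small_cases (e : int) s : (e = 1 \/ e = -1) -> (0 < size s)%N ->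
  (size s < 3)%N -> is_cycle e s -> size s = 2%N /\ s = [:: 0; 0].
Proof.
move=> he h0 h3; rewrite /is_cycle.
case: s h0 h3 => [|a [|b [|c s]]] //= _ _;
  move/matrixP => H; have := H ord0 (lift ord0 ord0);
  have := H (lift ord0 ord0) ord0;
  rewrite /eta_prod /= ?mulmx1 ?mxE ?big_ord_recr ?big_ord0 ?add0r /= ?mxE /=.
- by rewrite mulr0n.
- move=> hb ha. have hb' : b = 0 by lia. have ha' : a = 0 by lia.
  by rewrite ha' hb'.
Qed.

Lemma local_step (e : int) a x b rest : is_cycle e (a :: x :: b :: rest) ->
  (x = 1 -> is_cycle e [:: a - 1, b - 1 & rest]) /\
  (x = 0 -> is_cycle (- e) ((a + b) :: rest)) /\
  (x = -1 -> is_cycle (- e) [:: a + 1, b + 1 & rest]).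
Proof.
rewrite /is_cycle !eta_prod_cons !mulmxA => H; split; [|split] => hx; subst x.
- by rewrite -eta3_1.
- move: H; rewrite eta3_0 mulNmx => H.
  by rewrite -[LHS]opprK H raddfN.
- move: H; rewrite eta3_m1 mulNmx => H.
  by rewrite -[LHS]opprK H raddfN.
Qed.

Theorem theorem6p2 (e : int) (s : seq int) :
  (e = 1 \/ e = -1) ->
  (0 < size s)%N ->
  is_cycle e s ->
  (size s = 2%N /\ s = [:: 0; 0])
  \/ ((3 <= size s)%N /\ exists k : nat, (k < size s)%N /\ nth 0 s k = 1 /\
        is_cycle e (contract_pair (fun x => x - 1) (fun x => x - 1) s k))
  \/ ((3 <= size s)%N /\ exists k : nat, (k < size s)%N /\ nth 0 s k = 0 /\
        is_cycle (- e) (contract_sum s k))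
  \/ ((3 <= size s)%N /\ exists k : nat, (k < size s)%N /\ nth 0 s k = -1 /\
        is_cycle (- e) (contract_pair (fun x => x + 1) (fun x => x + 1) s k)).
Proof.
move=> he h0 hc.
have [h3|h3] := leqP 3 (size s); last by left; apply: small_cases he h0 h3 hc.
right.
have [c cin csmall] : exists2 c, c \in s & `|c| < 2.
  case: (boolP (has (fun c => `|c| < 2) s)) => [/hasP [c ? ?]|]; first by exists c.
  move/hasPn => hn.
  have hg : forall x, x \in s -> 2 <= `|x| by move=> x /hn /= hx; lia.
  have [_ hs] := (@grow s hg).
  move: hs; rewrite hc mxE /=.
  by case: he => ->; lia.
have [k hk hkc] : exists2 k, (k < size s)%N & nth 0 s k = c.
  by exists (index c s); [rewrite index_mem | rewrite nth_index].
have [a [b [rest hrot]]] := @rot_shape s k h3 hk.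
have hcr := @cycle_rot e s ((k + size s - 1) %% size s)%N he hc.
rewrite hrot in hcr.
have [L1 [L0 Lm]] := @local_step e a _ b rest hcr.
have hcp : forall f g, contract_pair f g s k =
    rotr ((k + size s - 1) %% size s)%N (f a :: g b :: rest).
  by move=> f g; rewrite /contract_pair hrot.
have hcs : contract_sum s k =
    rotr ((k + size s - 1) %% size s)%N ((a + b) :: rest).
  by rewrite /contract_sum hrot.
have he' : - e = 1 \/ - e = -1 by case: he => ->; [right|left].
have : c = -1 \/ c = 0 \/ c = 1 by lia.
case=> [hc1|[hc1|hc1]]; rewrite hc1 in hkc; rewrite hkc in L1 L0 Lm.
- right; right; split => //; exists k; do !split => //.
  by rewrite hcp; apply: (@cycle_rotr _ _ _ he' (Lm erefl)).
- right; left; split => //; exists k; do !split => //.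
  by rewrite hcs; apply: (@cycle_rotr _ _ _ he' (L0 erefl)).
- left; split => //; exists k; do !split => //.
  by rewrite hcp; apply: (@cycle_rotr _ _ _ he (L1 erefl)).
Qed.
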